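(* Let $R$ be a commutative ring and $f\in R[[X]]$. Suppose $f_0=ab$ with $a,b\in R$ and $(a,b)=R$, and choose $r,s\in R$ with $ra+sb=1$. Set $g_0=0$ and, for $n\ge 1$, $g_n=f_n-rs\sum_{i=1}^{n-1}g_ig_{n-i}$. Then $g=\sum_{n\ge0}g_nX^n\in R[[X]]$ is the unique solution $g$ with $g_0=0$ of the equation $f=(a+sg)(b+rg)$, and $(a+sg,\,b+rg)=R[[X]]$.
   Context: $f_i$ denotes the coefficient of $X^i$ in $f$. *)

(* Defs.v *)
From mathcomp Require Import all_boot all_algebra.
Set Implicit Arguments. Unset Strict Implicit. Unset Printing Implicit Defensive.
Import GRing.Theory.
Local Open Scope ring_scope.

(* Formal power series over R, represented by their coefficient sequences:
   f n is the coefficient f_n of X^n. *)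
Definition pser (R : Type) := nat -> R.

Section PSer.
Variable R : comPzRingType.

Definition pconst (c : R) : pser R := fun n => if n is 0 then c else 0.
Definition padd (f g : pser R) : pser R := fun n => f n + g n.
Definition pscale (c : R) (f : pser R) : pser R := fun n => c * f n.
Definition pmul (f g : pser R) : pser R :=
  fun n => \sum_(i < n.+1) f i * g (n - i)%N.

Definition pcomaximal (A B : pser R) : Prop :=
  exists U V : pser R, forall n, padd (pmul U A) (pmul V B) n = pconst 1 n.

Fixpoint gtab (f : pser R) (r s : R) (n : nat) : seq R :=
  match n with
  | 0 => [:: 0]
  | m.+1 => let l := gtab f r s m in
      rcons l (f m.+1 - r * s * \sum_(1 <= i < m.+1) l`_i * l`_(m.+1 - i))
  end.

Definition gser (f : pser R) (r s : R) : pser R := fun n => (gtab f r s n)`_n.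

End PSer.

(* Main.v *)
Require Import Defs.
From mathcomp Require Import all_boot all_algebra.
From mathcomp Require Import ring zify.
Import GRing.Theory.
Local Open Scope ring_scope.

Section Tab.
Variable R : comPzRingType.
Variable x0 : R.
Variable F : nat -> seq R -> R.
Fixpoint tab n : seq R := match n with 0 => [:: x0] | m.+1 => rcons (tab m) (F m (tab m)) end.
Lemma size_tab n : size (tab n) = n.+1.
Proof. by elim: n => //= n IH; rewrite size_rcons IH. Qed.
Lemma tab_nth n i : (i <= n)%N -> (tab n)`_i = (tab i)`_i.
Proof.
elim: n => [|n IH]; first by rewrite leqn0 => /eqP->.
rewrite leq_eqVlt => /orP[/eqP->//|Hi].
by rewrite /= nth_rcons size_tab Hi IH.
Qed.
Lemma tab_S m : (tab m.+1)`_m.+1 = F m (tab m).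
Proof. by rewrite /= nth_rcons size_tab ltnn eqxx. Qed.
End Tab.

Section Main.
Variable R : comPzRingType.

Lemma gtab_tab (f : pser R) r s n : gtab f r s n =
  @tab R 0 (fun m l => f m.+1 - r * s * \sum_(1 <= i < m.+1) l`_i * l`_(m.+1 - i)) n.
Proof. by elim: n => //= n ->. Qed.

Lemma gser_rec (f : pser R) r s m : gser f r s m.+1 =
  f m.+1 - r * s * \sum_(1 <= i < m.+1) gser f r s i * gser f r s (m.+1 - i)%N.
Proof.
rewrite /gser gtab_tab tab_S; congr (_ - _ * _).
apply: eq_big_nat => i /andP[H1 H2].
rewrite !gtab_tab !tab_nth //; last by rewrite leq_subLR; move: H1 H2; case: i => // i _ _; rewrite addSn ltnS leq_addl.
Qed.

Lemma coef0 (a b r s : R) (h : pser R) : h 0%N = 0 ->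
  pmul (padd (pconst a) (pscale s h)) (padd (pconst b) (pscale r h)) 0 = a * b.
Proof.
move=> h0; rewrite /pmul big_ord_recl big_ord0 /padd /pscale /pconst /= h0.
by rewrite !mulr0 !addr0.
Qed.

Lemma coefS (a b r s : R) (h : pser R) m : h 0%N = 0 -> r * a + s * b = 1 ->
  pmul (padd (pconst a) (pscale s h)) (padd (pconst b) (pscale r h)) m.+1 =
  h m.+1 + r * s * \sum_(1 <= i < m.+1) h i * h (m.+1 - i)%N.
Proof.
move=> h0 hab; rewrite /pmul -(big_mkord xpredT (fun i =>
  padd (pconst a) (pscale s h) i * padd (pconst b) (pscale r h) (m.+1 - i)%N)).
rewrite big_nat_recl // big_nat_recr //= subn0 subnn.
rewrite /padd /pscale /pconst /= h0.
rewrite big_add1 /= big_distrr /=.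
have -> : \sum_(0 <= i < m) (0 + s * h i.+1) * (match (m.+1 - i.+1)%N with 0%N => b | _.+1 => 0 end + r * h (m.+1 - i.+1)%N)
  = \sum_(0 <= i < m) r * s * (h i.+1 * h (m.+1 - i.+1)%N).
  apply: eq_big_nat => i /andP[_ Hi].
  have E : (m.+1 - i.+1 = (m - i.+1).+1)%N by lia.
  rewrite E; ring.
rewrite -[in RHS](big_add1 _ _ 0 m.+1 xpredT (fun i => r * s * (h i * h (m.+1 - i)%N))) /=.
transitivity (h m.+1 * (r * a + s * b) + \sum_(0 <= i < m) r * s * (h i.+1 * h (m.+1 - i.+1)%N)); first ring.
by rewrite hab mulr1 big_add1.
Qed.

Lemma pinv (u : pser R) : u 0%N = 1 ->
  exists w : pser R, forall n, \sum_(i < n.+1) w i * u (n - i)%N = pconst 1 n.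
Proof.
move=> u0.
pose T := @tab R 1 (fun m l => - \sum_(i < m.+1) l`_i * u (m.+1 - i)%N).
exists (fun n => (T n)`_n) => -[|m].
  by rewrite big_ord_recl big_ord0 /= u0 mulr1 addr0.
rewrite big_ord_recr /= subnn u0 mulr1 /T tab_S.
rewrite -/T.
have -> : \sum_(i < m.+1) (T i)`_i * u (m.+1 - i)%N = \sum_(i < m.+1) (T m)`_i * u (m.+1 - i)%N.
  apply: eq_bigr => i _; rewrite /T tab_nth //; by rewrite -ltnS.
by rewrite subrr.
Qed.
End Main.

Theorem proposition2p2 (R : comPzRingType) (f : pser R) (a b r s : R) :
  f 0%N = a * b ->
  r * a + s * b = 1 ->
  let g := gser f r s in
  [/\ g 0%N = 0,
      (forall n, f n = pmul (padd (pconst a) (pscale s g))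
                            (padd (pconst b) (pscale r g)) n),
      (forall h : pser R, h 0%N = 0 ->
         (forall n, f n = pmul (padd (pconst a) (pscale s h))
                               (padd (pconst b) (pscale r h)) n) ->
         forall n, h n = g n)
    & pcomaximal (padd (pconst a) (pscale s g)) (padd (pconst b) (pscale r g))].
Proof.
move=> f0 hab g.
have g0 : g 0%N = 0 by [].
split => //.
- case=> [|m]; first by rewrite coef0.
  by rewrite coefS // /g gser_rec subrK.
- move=> h h0 hf.
  suff H : forall k n, (n <= k)%N -> h n = g n by move=> n; exact: (H n n (leqnn n)).
  elim=> [|k IH] n'.
    by rewrite leqn0 => /eqP ->; rewrite h0 g0.
  rewrite leq_eqVlt => /orP[/eqP ->|]; last by rewrite ltnS; exact: IH.
  have := hf k.+1; rewrite coefS // => E.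
  rewrite /g gser_rec E.
  have -> : \sum_(1 <= i < k.+1) gser f r s i * gser f r s (k.+1 - i)%N
          = \sum_(1 <= i < k.+1) h i * h (k.+1 - i)%N.
    apply: eq_big_nat => i /andP[H1 H2].
    by rewrite (IH i) ?(IH (k.+1 - i)%N) //; lia.
  by rewrite addrK.
- pose u := fun n => r * padd (pconst a) (pscale s g) n + s * padd (pconst b) (pscale r g) n.
  have u0 : u 0%N = 1 by rewrite /u /padd /pscale /pconst /= g0 !mulr0 !addr0.
  have [w hw] := @pinv R u u0.
  exists (fun n => r * w n), (fun n => s * w n) => n.
  rewrite /padd /pmul -big_split /= -hw.
  apply: eq_bigr => i _; rewrite /u /padd; ring.
Qed.
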